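(* Let $1\leq a_1\leq\cdots\leq a_k$, $k\geq 3$, be a partition of a natural number $n$ such that $a_{k-1}\leq a_k-2$. Then $$S(a_1,\dots,a_{k-2},a_{k-1},a_k)\prec S(a_1,\dots,a_{k-2},a_{k-1}+1,a_k-1).$$
   Context: $M_k(G)$ denotes the number of closed walks of length $k$ in a graph $G$. For graphs $G,H$, $G\prec H$ means $M_k(G)\leq M_k(H)$ for all $k\geq 0$ with strict inequality for at least one $k$. For positive integers $a_1,\dots,a_k$, the starlike tree $S(a_1,\dots,a_k)$ is obtained from disjoint paths $P_{a_1+1},\dots,P_{a_k+1}$ ($P_m$ the path on $m$ vertices) by identifying one end vertex of each path into a single vertex (the center); the resulting pendant paths from the center are the branches, of lengths $a_1,\dots,a_k$. *)

(* Defs.v *)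
From mathcomp Require Import all_boot.
Set Implicit Arguments. Unset Strict Implicit. Unset Printing Implicit Defensive.

(* A simple graph is a symmetric irreflexive relation e on a finite vertex type. *)

Fixpoint walks (T : finType) (e : rel T) (k : nat) (u v : T) : nat :=
  match k with
  | 0 => (u == v : nat)
  | k'.+1 => \sum_(w : T) (e u w : nat) * walks e k' w v
  end.

Definition closed_walks (T : finType) (e : rel T) (k : nat) : nat :=
  \sum_(u : T) walks e k u u.

Definition walk_prec (T1 T2 : finType) (e1 : rel T1) (e2 : rel T2) : Prop :=
  (forall k, closed_walks e1 k <= closed_walks e2 k) /\
  (exists k, closed_walks e1 k < closed_walks e2 k).

(* Starlike tree S(a_1,...,a_k) for s = [:: a_1; ...; a_k], on vertices
   0 .. sumn s : vertex 0 is the center; branch i (0-based) consists of the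
   consecutive vertices p_i+1, ..., p_i+a_i with p_i = a_1+...+a_(i-1),
   forming a path, and the center is joined to each branch start p_i+1. *)
Definition branch_starts (s : seq nat) : seq nat :=
  [seq (sumn (take i s)).+1 | i <- iota 0 (size s)].

Definition star_adj_ord (s : seq nat) (x y : nat) : bool :=
  (* x < y assumed *)
  ((y == x.+1) && (y \notin branch_starts s)) ||
  ((x == 0) && (y \in branch_starts s)).

Definition starlike_rel (s : seq nat) : rel 'I_(sumn s).+1 :=
  fun x y => (x != y) && star_adj_ord s (minn x y) (maxn x y).
Arguments starlike_rel s : clear implicits.

(* Main.v *)
Require Import Defs.
From mathcomp Require Import zify.
From mathcomp Require Import all_boot.
Set Implicit Arguments. Unset Strict Implicit. Unset Printing Implicit Defensive.

Section Generic.
Variable T : finType.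
Implicit Types e : rel T.

Lemma walksS e k u v : walks e k.+1 u v = \sum_w (e u w : nat) * walks e k w v.
Proof. by []. Qed.

Lemma walks0 e u v : walks e 0 u v = (u == v). Proof. by []. Qed.

Lemma walksD e a b u v :
  walks e (a + b) u v = \sum_w walks e a u w * walks e b w v.
Proof.
elim: a u => [|a IH] u /=.
  rewrite (bigD1 u) //= eqxx mul1n big1 ?addn0 // => w /negbTE.
  by rewrite eq_sym => ->.
rewrite (eq_bigr (fun w => (e u w : nat) * \sum_x walks e a w x * walks e b x v)); last by move=> w _; rewrite IH.
rewrite (eq_bigr (fun w => \sum_x (e u w : nat) * (walks e a w x * walks e b x v))); last by move=> w _; rewrite big_distrr.
rewrite exchange_big /=; apply: eq_bigr => x _.
by rewrite big_distrl /=; apply: eq_bigr => w _; rewrite mulnA.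
Qed.

Lemma walks1 e u v : walks e 1 u v = e u v.
Proof.
rewrite /= (bigD1 v) //= eqxx muln1 big1 ?addn0 // => w /negbTE ->.
by rewrite muln0.
Qed.

Lemma walksSr e k u v : walks e k.+1 u v = \sum_w walks e k u w * (e w v : nat).
Proof.
rewrite -addn1 walksD; apply: eq_bigr => w _; by rewrite walks1.
Qed.

Lemma walks_sym e : symmetric e -> forall k u v, walks e k u v = walks e k v u.
Proof.
move=> se; elim=> [|k IH] u v; first by rewrite /= eq_sym.
rewrite walksS walksSr; apply: eq_bigr => w _.
by rewrite IH se mulnC.
Qed.

End Generic.

Lemma ltn_leq_addX m1 n1 m2 n2 : m1 < n1 -> m2 <= n2 -> m1 + m2 < n1 + n2.
Proof. lia. Qed.

Lemma ltn_sumX (I : finType) (P : pred I) (F G : I -> nat) i0 :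
  P i0 -> (forall i, P i -> F i <= G i) -> F i0 < G i0 ->
  \sum_(i | P i) F i < \sum_(i | P i) G i.
Proof.
move=> Pi0 le lt; rewrite (bigD1 i0) //= [X in _ < X](bigD1 i0) //=.
apply: ltn_leq_addX => //; apply: leq_sum => i /andP[Pi _]; exact: le.
Qed.

Section Cut.
Variable T : finType.
Variable r : T.
Variable R : pred T.
Hypothesis rR : ~~ R r.

Definition eP (e : rel T) : rel T := fun u v => e u v && ~~ R u && ~~ R v.

Lemma eP_sym e : symmetric e -> symmetric (eP e).
Proof. by move=> se u v; rewrite /eP se; case: (R u); case: (R v); rewrite ?andbF ?andbT. Qed.

Lemma walksP_R0 e k u v : ~~ R u -> R v -> walks (eP e) k u v = 0.
Proof.
elim: k u => [|k IH] u Ru Rv /=.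
  by case: eqP => // E; move: Ru; rewrite E Rv.
apply: big1 => w _; rewrite /eP; case: (e u w) => //=; case Rw: (R w) => /=.
  by rewrite andbF.
by rewrite andbT Ru IH ?Rw.
Qed.

Lemma walksP_R0' e k u v : R u -> ~~ R v -> walks (eP e) k u v = 0.
Proof.
case: k => [|k] Ru Rv /=.
  by case: eqP => // E; move: Rv; rewrite -E Ru.
by apply: big1 => w _; rewrite /eP Ru andbF.
Qed.

Definition cutP (e : rel T) := forall u v, R u -> ~~ R v -> e u v -> v = r.

Lemma decompP e : symmetric e -> cutP e -> forall k u y, ~~ R u ->
  walks e k u y = walks (eP e) k u y +
    \sum_(a < k) walks (eP e) a u r *
       \sum_(w | R w) (e r w : nat) * walks e (k - a.+1) w y.
Proof.
move=> se cut; elim=> [|k IH] u y Ru.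
  by rewrite big_ord0 addn0.
rewrite walksS big_ord_recl /= subSS subn0.
have split1 : forall w, (e u w : nat) = (eP e u w : nat) + (e u w && R w : nat).
  by move=> w; rewrite /eP Ru /=; case: (e u w); case: (R w).
rewrite (eq_bigr (fun w => (eP e u w : nat) * walks e k w y + (e u w && R w : nat) * walks e k w y));
  last by move=> w _; rewrite split1 mulnDl.
rewrite big_split /=.
have -> : \sum_w (e u w && R w : nat) * walks e k w y =
          (u == r) * \sum_(w | R w) (e r w : nat) * walks e k w y.
  case: eqP => [->|ne].
    rewrite mul1n [RHS]big_mkcond /=; apply: eq_bigr => w _.
    by case: (R w); rewrite ?andbT ?andbF.
  rewrite mul0n; apply: big1 => w _.
  case E: (e u w) => //; case Rw: (R w) => //=.
  by exfalso; apply: ne; apply: (cut w u) => //; rewrite se.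
rewrite addnC [RHS]addnCA; congr (_ + _).
rewrite (eq_bigr (fun i : 'I_k => \sum_w (eP e u w : nat) * (walks (eP e) i w r *
            \sum_(w0 | R w0) (e r w0 : nat) * walks e (k - i.+1) w0 y))); last first.
  move=> i _; rewrite add0n subSS big_distrl /=; apply: eq_bigr => w _; by rewrite mulnA.
rewrite exchange_big /= -big_split /=; apply: eq_bigr => w _.
case Ew: (eP e u w); last by rewrite !mul0n big1.
have Rw : ~~ R w by move: Ew; rewrite /eP => /andP[_ ->].
rewrite IH //= !mul1n; congr (_ + _).
by apply: eq_bigr => i _; rewrite mul1n.
Qed.

Variables e1 e2 : rel T.
Hypothesis se1 : symmetric e1.
Hypothesis se2 : symmetric e2.
Hypothesis cut1 : cutP e1.
Hypothesis cut2 : cutP e2.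
Hypothesis HR : forall u v, R u -> e1 u v = e2 u v.
Hypothesis HW : forall n, walks (eP e1) n r r <= walks (eP e2) n r r.

Lemma HRr w : R w -> e1 r w = e2 r w.
Proof. by move=> Rw; rewrite se1 se2 HR. Qed.

Definition Rb u := R u || (u == r).

Lemma monoRb k u v : Rb u -> Rb v -> walks e1 k u v <= walks e2 k u v.
Proof.
elim/ltn_ind: k u v => k IH u v Ru Rv.
case/orP: Ru => [Ru|/eqP->].
  case: k IH => [|k] IH; first by [].
  rewrite !walksS; apply: leq_sum => w _.
  rewrite -HR //; case E: (e1 u w); last by [].
  rewrite !mul1n; apply: IH => //.
  rewrite /Rb; case Rw: (R w) => //=; apply/eqP; apply: (cut1 Ru) => //; by rewrite Rw.
rewrite (decompP se1 cut1) // (decompP se2 cut2) //.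
apply: leq_add.
  case/orP: Rv => [Rv|/eqP->]; first by rewrite !walksP_R0.
  exact: HW.
apply: leq_sum => a _; apply: leq_mul; first exact: HW.
apply: leq_sum => w Rw; rewrite HRr //; apply: leq_mul => //.
apply: IH; first by rewrite subnSK //; lia.
  by rewrite /Rb Rw.
done.
Qed.


Definition Term (e : rel T) k :=
  \sum_(a < k) \sum_(w | R w) (e r w : nat) *
    \sum_(b < k - a.+1) (\sum_(w' | R w') (e r w' : nat) * walks e (k - a.+1 - b.+1) w' w)
       * walks (eP e) (a + b) r r.

Lemma sumP2 e : symmetric e -> forall a b,
  \sum_(u | ~~ R u) walks (eP e) a u r * walks (eP e) b u r = walks (eP e) (a + b) r r.
Proof.
move=> se a b; rewrite walksD [RHS](bigID R) /= [X in _ = X + _]big1 ?add0n; last first.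
  by move=> u Ru; rewrite walksP_R0 ?mul0n.
by apply: eq_bigr => u _; rewrite (walks_sym (eP_sym se)).
Qed.

Lemma cw_formula e : symmetric e -> cutP e -> forall k,
  closed_walks e k = \sum_(u | R u) walks e k u u + \sum_(u | ~~ R u) walks (eP e) k u u + Term e k.
Proof.
move=> se cut k; rewrite /closed_walks (bigID R) /= -addnA; congr (_ + _).
rewrite (eq_bigr (fun u => walks (eP e) k u u + \sum_(a < k) walks (eP e) a u r *
       \sum_(w | R w) (e r w : nat) * walks e (k - a.+1) w u)); last first.
  by move=> u Ru; rewrite (decompP se cut).
rewrite big_split /=; congr (_ + _).
rewrite exchange_big /=; apply: eq_bigr => a _.
set j := k - a.+1.
rewrite (eq_bigr (fun u => \sum_(w | R w) walks (eP e) a u r * ((e r w : nat) * walks e j w u))); last first.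
  by move=> u _; rewrite big_distrr.
rewrite exchange_big /=; apply: eq_bigr => w Rw.
rewrite (eq_bigr (fun u => (e r w : nat) * (walks (eP e) a u r * walks e j w u))); last first.
  by move=> u _; rewrite mulnCA.
rewrite -big_distrr /=; congr (_ * _).
rewrite (eq_bigr (fun u => \sum_(b < j) (\sum_(w' | R w') (e r w' : nat) * walks e (j - b.+1) w' w) *
           (walks (eP e) a u r * walks (eP e) b u r))); last first.
  move=> u Ru; rewrite (walks_sym se) (decompP se cut) // (walksP_R0 _ _ Ru Rw) add0n big_distrr /=.
  by apply: eq_bigr => b _; rewrite mulnA [LHS]mulnC.
rewrite exchange_big /=; apply: eq_bigr => b _.
by rewrite -big_distrr /= sumP2.
Qed.

Lemma Term_le k : Term e1 k <= Term e2 k.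
Proof.
apply: leq_sum => a _; apply: leq_sum => w Rw; rewrite HRr //; apply: leq_mul => //.
apply: leq_sum => b _; apply: leq_mul => //.
apply: leq_sum => w' Rw'; rewrite HRr //; apply: leq_mul => //.
by apply: monoRb; rewrite /Rb ?Rw ?Rw'.
Qed.

Hypothesis HPsum : forall k,
  \sum_(u | ~~ R u) walks (eP e1) k u u = \sum_(u | ~~ R u) walks (eP e2) k u u.

Lemma cw_le k : closed_walks e1 k <= closed_walks e2 k.
Proof.
rewrite (cw_formula se1 cut1) (cw_formula se2 cut2) HPsum.
apply: leq_add; last exact: Term_le.
apply: leq_add => //; apply: leq_sum => u Ru; apply: monoRb; by rewrite /Rb Ru.
Qed.

Lemma cw_lt n w0 : R w0 -> e1 r w0 ->
  walks (eP e1) n r r < walks (eP e2) n r r -> closed_walks e1 n.+2 < closed_walks e2 n.+2.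
Proof.
move=> Rw0 ew0 lt.
rewrite (cw_formula se1 cut1) (cw_formula se2 cut2) HPsum.
have aux : forall a1 a2 p t1 t2, a1 <= a2 -> t1 < t2 -> a1 + p + t1 < a2 + p + t2 by move=> *; lia.
apply: aux; first by apply: leq_sum => u Ru; apply: monoRb; rewrite /Rb Ru.
rewrite /Term.
apply: (@ltn_sumX _ predT _ _ (@Ordinal n.+2 n (leqnSn n.+1))) => //.
  move=> a _; apply: leq_sum => w Rw; rewrite HRr //; apply: leq_mul => //.
  apply: leq_sum => b _; apply: leq_mul => //.
  apply: leq_sum => w' Rw'; rewrite HRr //; apply: leq_mul => //.
  by apply: monoRb; rewrite /Rb ?Rw ?Rw'.
apply: (@ltn_sumX _ R _ _ w0) => //.
  move=> w Rw; rewrite HRr //; apply: leq_mul => //.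
  apply: leq_sum => b _; apply: leq_mul => //.
  apply: leq_sum => w' Rw'; rewrite HRr //; apply: leq_mul => //.
  by apply: monoRb; rewrite /Rb ?Rw ?Rw'.
rewrite -HRr // ew0 !mul1n.
have -> : n.+2 - n.+1 = 1 by lia.
rewrite !big_ord1 (_ : 1 - (@ord0 0).+1 = 0) // (_ : Ordinal (leqnSn n.+1) + @ord0 0 = n) /=; last by rewrite addn0.
have -> : \sum_(w' | R w') (e2 r w' : nat) * (w' == w0) =
          \sum_(w' | R w') (e1 r w' : nat) * (w' == w0).
  by apply: eq_bigr => w' Rw'; rewrite HRr.
rewrite ltn_pmul2l //.
by rewrite (bigD1 w0) //= ew0 eqxx.
Qed.

End Cut.

Fixpoint pw (M k i j : nat) : nat :=
  match k with
  | 0 => (i == j : nat)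
  | k'.+1 => ((0 < i) : nat) * pw M k' i.-1 j + ((i < M) : nat) * pw M k' i.+1 j
  end.

Lemma pw_refl M k i j : i <= M -> j <= M -> pw M k i j = pw M k (M - i) (M - j).
Proof.
elim: k i => [|k IH] i Hi Hj /=.
  by congr nat_of_bool; apply/eqP/eqP; lia.
have -> : (0 < M - i) = (i < M) by lia.
have -> : (M - i < M) = (0 < i) by lia.
rewrite addnC; congr (_ + _).
  case: ltnP => // iM; rewrite IH //; congr (_ * pw _ _ _ _); lia.
case: ltnP => // iM; rewrite IH //; try lia; congr (_ * pw _ _ _ _); lia.
Qed.

Lemma pwSr M k i j : i <= M -> j <= M ->
  pw M k.+1 i j = ((0 < j) : nat) * pw M k i j.-1 + ((j < M) : nat) * pw M k i j.+1.
Proof.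
elim: k i j => [|k IH] i j Hi Hj.
  rewrite /=.
  case: i Hi => [|i] Hi; case: j Hj => [|j] Hj /=; rewrite ?eqSS;
  repeat (case: eqP => /= ?); repeat (case: ltnP => /= ?); rewrite ?mul0n ?mul1n ?addn0 ?add0n; lia.
have L1 : ((0 < i) : nat) * pw M k.+1 i.-1 j =
   ((0 < i) : nat) * (((0 < j) : nat) * pw M k i.-1 j.-1 + ((j < M) : nat) * pw M k i.-1 j.+1).
  case: i Hi => [|i] Hi; first by rewrite !mul0n.
  by rewrite IH //; lia.
have L2 : ((i < M) : nat) * pw M k.+1 i.+1 j =
   ((i < M) : nat) * (((0 < j) : nat) * pw M k i.+1 j.-1 + ((j < M) : nat) * pw M k i.+1 j.+1).
  case: ltnP => iM; first by rewrite IH.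
  by rewrite !mul0n.
rewrite [LHS]/= L1 L2 [pw M k.+1 i j.-1]/= [pw M k.+1 i j.+1]/=.
set a := pw M k i.-1 j.-1. set b := pw M k i.-1 j.+1. set c := pw M k i.+1 j.-1. set d := pw M k i.+1 j.+1.
case: (0 < i); case: (0 < j); case: (i < M); case: (j < M); rewrite /= ?mul0n ?mul1n ?addn0 ?add0n ?muln0 ?muln1; lia.
Qed.

Lemma pw_sym M k i j : i <= M -> j <= M -> pw M k i j = pw M k j i.
Proof.
elim: k i j => [|k IH] i j Hi Hj; first by rewrite /= eq_sym.
rewrite [RHS]pwSr //= [pw M k i.-1 j]IH; try lia.
case: (ltnP i M) => iM; last by rewrite !mul0n.
by rewrite (IH i.+1).
Qed.

Lemma pw_step2 M k i j : i + j + 2 <= M ->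
  (forall i j, i + j + 2 <= M -> pw M k i j <= pw M k i.+1 j.+1) ->
  pw M k i.+1 j <= pw M k i.+2 j.+1.
Proof.
move=> H IH; case: (ltnP (i + j + 2) M) => h.
  apply: IH; lia.
have E : M = i + j + 2 by lia.
rewrite (@pw_refl M k i.+2 j.+1); try lia.
rewrite (@pw_sym M k (M - i.+2)); try lia.
have -> : M - j.+1 = i.+1 by lia.
by have -> : M - i.+2 = j by lia.
Qed.

Lemma pw_mono M k i j : i + j + 2 <= M -> pw M k i j <= pw M k i.+1 j.+1.
Proof.
elim: k i j => [|k IH] i j H; first by rewrite /= eqSS.
have iM : i < M by lia.
have i1M : i.+1 < M by lia.
rewrite [pw M k.+1 i j]/= [pw M k.+1 i.+1 j.+1]/= iM i1M !mul1n.
apply: leq_add.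
  case: i H {iM i1M} => [|i] H; first by rewrite mul0n.
  rewrite mul1n; apply: IH; lia.
by apply: pw_step2.
Qed.

Lemma pw_pos M d i : i + d <= M -> 0 < pw M d i (i + d).
Proof.
elim: d i => [|d IH] i H; first by rewrite addn0 /= eqxx.
rewrite /=; have -> : i < M by lia.
rewrite mul1n -addSnnS; apply: leq_trans (IH i.+1 _) _; first lia.
exact: leq_addl.
Qed.

Lemma ltn_leq_addY m1 n1 m2 n2 : m1 < n1 -> m2 <= n2 -> m1 + m2 < n1 + n2.
Proof. lia. Qed.

Lemma pwS M k i j : pw M k.+1 i j = ((0 < i) : nat) * pw M k i.-1 j + ((i < M) : nat) * pw M k i.+1 j.
Proof. by []. Qed.

Lemma pw_strict M i j : i + j + 2 <= M -> pw M (i + j + 2) i j < pw M (i + j + 2) i.+1 j.+1.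
Proof.
elim: i j => [|i IH] j H.
  have -> : 0 + j + 2 = j.+2 by lia.
  rewrite (pwS M j.+1 0 j) (pwS M j.+1 1 j.+1).
  have -> : 0 < M by lia.
  have -> : 1 < M by lia.
  rewrite !mul1n mul0n add0n.
  rewrite addnC; apply: (@leq_trans (pw M j.+1 2 j.+1 + 1)).
    rewrite addn1 ltnS; apply: pw_step2; [lia | by move=> *; apply: pw_mono].
  rewrite leq_add2l; have := @pw_pos M j.+1 0; rewrite add0n; apply; lia.
have -> : i.+1 + j + 2 = (i + j + 2).+1 by lia.
rewrite (pwS M _ i.+1 j) (pwS M _ i.+2 j.+1).
have -> : 0 < i.+1 by [].
have -> : 0 < i.+2 by [].
have -> : i.+1 < M by lia.
have -> : i.+2 < M by lia.
rewrite !mul1n; apply: ltn_leq_addY.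
  apply: IH; lia.
apply: pw_step2; [lia | by move=> *; apply: pw_mono].
Qed.

Lemma bs_cat s t : branch_starts (s ++ t) =
  branch_starts s ++ map (addn (sumn s)) (branch_starts t).
Proof.
rewrite /branch_starts size_cat iotaD map_cat add0n; congr (_ ++ _).
  apply/eq_in_map => i; rewrite mem_iota add0n => /andP[_ lt].
  by rewrite take_cat lt.
rewrite -[in LHS](addn0 (size s)) iotaDl -!map_comp; apply: eq_map => i /=.
rewrite take_cat ltnNge leq_addr /= addKn sumn_cat; lia.
Qed.

Lemma bs_two X Y : branch_starts [:: X; Y] = [:: 1; X.+1].
Proof. by rewrite /branch_starts /= addn0. Qed.

Lemma bs_range c y : all (fun x => 0 < x) c -> y \in branch_starts c -> 0 < y <= sumn c.
Proof.
move=> /allP pc /mapP [i]; rewrite mem_iota add0n => /andP[_ lt] ->.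
rewrite ltn0Sn /=.
rewrite -{2}(cat_take_drop i c) sumn_cat (drop_nth 0 lt) /=.
have : 0 < nth 0 c i by apply: pc; exact: mem_nth.
lia.
Qed.

Lemma bs_1 c : c != [::] -> 1 \in branch_starts c.
Proof.
case: c => // x c _; rewrite /branch_starts /=; by rewrite in_cons.
Qed.

Lemma mem_bs2 c X Y y : y \in branch_starts (c ++ [:: X; Y]) =
  (y \in branch_starts c) || (y == (sumn c).+1) || (y == sumn c + X.+1).
Proof.
rewrite bs_cat bs_two mem_cat /= !in_cons in_nil orbF orbA; congr (_ || _ || _).
  by rewrite addn1.
Qed.

Definition srel (s : seq nat) : rel nat :=
  fun x y => (x != y) && star_adj_ord s (minn x y) (maxn x y).

Lemma srel_sym s : symmetric (srel s).
Proof. by move=> x y; rewrite /srel eq_sym minnC maxnC. Qed.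

Ltac ifs := repeat (case: ifP => [?|/negbT ?]).

Section Nat.
Variable c : seq nat.
Hypothesis pc : all (fun x => 0 < x) c.
Local Notation S := (sumn c).

Definition srelc u v :=
  (u != v) && (((maxn u v == (minn u v).+1) && ~~ ((maxn u v \in branch_starts c) || (maxn u v == S.+1)))
   || ((minn u v == 0) && ((maxn u v \in branch_starts c) || (maxn u v == S.+1)))).

Lemma srel_R X Y u v : 0 < X -> 0 < u <= S -> srel (c ++ [:: X; Y]) u v = srelc u v.
Proof.
move=> X0 uR; rewrite /srel /star_adj_ord /srelc mem_bs2.
case E: (maxn u v == S + X.+1); last by rewrite !orbF.
move/eqP: E => E.
have h1 : (maxn u v == (minn u v).+1) = false by apply/negbTE/eqP; lia.
have h2 : (minn u v == 0) = false by apply/negbTE/eqP; lia.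
by rewrite h1 h2 /= andbF.
Qed.

Definition posn X Y u := if u == 0 then Y else if u <= S + X then Y + (u - S) else Y - (u - (S + X)).
Definition iposn X Y m := if m == Y then 0 else if Y < m then S + (m - Y) else S + X + (Y - m).
Definition Pdom X Y u := (u == 0) || (S < u <= S + X + Y).

Lemma posn_le X Y u : Pdom X Y u -> posn X Y u <= X + Y.
Proof. rewrite /Pdom /posn; ifs; lia. Qed.

Lemma iposn_ok X Y m : m <= X + Y -> Pdom X Y (iposn X Y m) && (posn X Y (iposn X Y m) == m).
Proof. move=> H; rewrite /Pdom /iposn; ifs; rewrite /posn /=; ifs; lia. Qed.

Lemma iposn_posn X Y u : 0 < X -> Pdom X Y u -> iposn X Y (posn X Y u) = u.
Proof. move=> X0; rewrite /Pdom /posn; ifs; rewrite /iposn /=; ifs; lia. Qed.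

Lemma srel_P X Y u v : 0 < X -> 0 < Y -> Pdom X Y u -> Pdom X Y v ->
  srel (c ++ [:: X; Y]) u v = (posn X Y u == (posn X Y v).+1) || (posn X Y v == (posn X Y u).+1).
Proof.
move=> X0 Y0 Pu Pv; rewrite /srel /star_adj_ord mem_bs2.
have -> : (maxn u v \in branch_starts c) = false.
  apply/negP => /(bs_range pc); move: Pu Pv; rewrite /Pdom; lia.
move: Pu Pv; rewrite /Pdom /posn /= => Pu Pv; ifs; apply/idP/idP; lia.
Qed.

End Nat.

Section PosPath.
Variable T : finType.
Variable R : pred T.
Variable e : rel T.
Variable pos : T -> nat.
Variable ipos : nat -> T.
Variable M : nat.
Hypothesis p1 : forall u, ~~ R u -> pos u <= M.
Hypothesis p2 : forall m, m <= M -> ~~ R (ipos m) && (pos (ipos m) == m).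
Hypothesis p3 : forall u, ~~ R u -> ipos (pos u) = u.
Hypothesis p4 : forall u v, ~~ R u -> ~~ R v ->
  e u v = (pos u == (pos v).+1) || (pos v == (pos u).+1).

Lemma pred_pos m w : m <= M -> (~~ R w && (pos w == m)) = (w == ipos m).
Proof.
move=> mM; apply/idP/idP.
  by case/andP => Rw /eqP <-; rewrite p3.
move/eqP ->; exact: p2.
Qed.

Lemma sum_pos m (F : nat -> nat) :
  \sum_w ((~~ R w && (pos w == m)) : nat) * F (pos w) = ((m <= M) : nat) * F m.
Proof.
case: (leqP m M) => mM.
  rewrite (eq_bigr (fun w => ((w == ipos m) : nat) * F (pos w))); last by move=> w _; rewrite pred_pos.
  rewrite (bigD1 (ipos m)) //= eqxx big1 ?addn0.
    by case/andP: (p2 mM) => _ /eqP ->.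
  by move=> w /negbTE ->.
rewrite big1 ?mul0n // => w _.
case Rw: (R w) => //=; case: eqP => //= E.
by have := p1 (negbT Rw); lia.
Qed.

Lemma walksP_pw k u v : ~~ R u -> ~~ R v -> walks (eP R e) k u v = pw M k (pos u) (pos v).
Proof.
elim: k u => [|k IH] u Ru Rv.
  rewrite /=; congr nat_of_bool; apply/eqP/eqP => [->//|E].
  by rewrite -(p3 Ru) E p3.
rewrite walksS.
rewrite (eq_bigr (fun w => (((~~ R w && (pos w == (pos u).-1)) && (0 < pos u)) : nat) * pw M k (pos w) (pos v)
   + ((~~ R w && (pos w == (pos u).+1)) : nat) * pw M k (pos w) (pos v))); last first.
  move=> w _; rewrite -mulnDl /eP Ru andbT.
  case Rw: (R w) => /=; first by rewrite andbF !mul0n.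
  rewrite andbT IH ?Rw // p4 ?Rw //; congr (_ * _).
  case: eqP; case: eqP; case: eqP; case: (ltnP 0 (pos u)) => /=; lia.
rewrite big_split /=.
rewrite (eq_bigr (fun w => ((0 < pos u) : nat) * ((((~~ R w && (pos w == (pos u).-1))) : nat) * pw M k (pos w) (pos v)))); last first.
  by move=> w _; case: (0 < pos u); case: (~~ R w && _); rewrite /= ?mul0n ?mul1n.
rewrite -big_distrr /= !(sum_pos _ (fun x => pw M k x (pos v))) /=.
have := p1 Ru => pM.
have -> : (pos u).-1 <= M by lia.
by rewrite mul1n.
Qed.

Lemma sum_ind n x : x < n -> \sum_(m < n) ((x == m) : nat) = 1.
Proof.
move=> xn; rewrite (bigD1 (Ordinal xn)) //= eqxx big1 ?addn0 // => m.
move=> ne; case: eqP => // E; exfalso; move/eqP: ne; apply; apply: val_inj; by rewrite /= -E.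
Qed.

Lemma sum_notR (F : nat -> nat) :
  \sum_(u | ~~ R u) F (pos u) = \sum_(m < M.+1) F m.
Proof.
rewrite (eq_bigr (fun m : 'I_M.+1 => \sum_w ((~~ R w && (pos w == m)) : nat) * F (pos w))); last first.
  by move=> m _; rewrite sum_pos -ltnS ltn_ord mul1n.
rewrite exchange_big /= [LHS]big_mkcond /=; apply: eq_bigr => u _.
case Ru: (R u) => /=.
  by rewrite big1 // => m _; rewrite mul0n.
rewrite -big_distrl /= sum_ind ?mul1n //.
by rewrite ltnS p1 ?Ru.
Qed.

End PosPath.

Definition rel_on N (E : rel nat) : rel 'I_N.+1 := fun x y => E x y.
Arguments rel_on : clear implicits.

Lemma eq_walks (T : finType) (e e' : rel T) : e =2 e' -> forall k u v, walks e k u v = walks e' k u v.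
Proof.
move=> ee; elim=> [|k IH] u v //=; apply: eq_bigr => w _; by rewrite ee IH.
Qed.

Lemma eq_closed (T : finType) (e e' : rel T) : e =2 e' -> forall k, closed_walks e k = closed_walks e' k.
Proof. move=> ee k; apply: eq_bigr => u _; exact: eq_walks. Qed.

Lemma starlike_relE s : starlike_rel s =2 rel_on (sumn s) (srel s).
Proof. by []. Qed.

Lemma cw_transport N1 N2 E k : N1 = N2 -> closed_walks (rel_on N1 E) k = closed_walks (rel_on N2 E) k.
Proof. by move->. Qed.

Section Concrete.
Variable c : seq nat.
Hypothesis c0 : c != [::].
Hypothesis pc : all (fun x => 0 < x) c.
Variables N X Y : nat.
Hypothesis X0 : 0 < X.
Hypothesis Y0 : 0 < Y.
Hypothesis HN : N = sumn c + X + Y.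

Local Notation S := (sumn c).
Definition Rn : pred 'I_N.+1 := fun u => (0 < u) && (u <= S).
Definition ee := rel_on N (srel (c ++ [:: X; Y])).
Definition posT (u : 'I_N.+1) := posn c X Y u.
Definition iposT (m : nat) : 'I_N.+1 := inord (iposn c X Y m).

Lemma S0 : 0 < S.
Proof. by case: c c0 pc => // x s _ /= /andP[x0 _]; lia. Qed.

Lemma notR_Pdom (u : 'I_N.+1) : ~~ Rn u -> Pdom c X Y u.
Proof. have := ltn_ord u; rewrite /Rn /Pdom; lia. Qed.

Lemma q1 u : ~~ Rn u -> posT u <= X + Y.
Proof. by move=> /notR_Pdom; apply: posn_le. Qed.

Lemma Pdom_le u : Pdom c X Y u -> u <= N.
Proof. rewrite /Pdom; lia. Qed.

Lemma q2 m : m <= X + Y -> ~~ Rn (iposT m) && (posT (iposT m) == m).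
Proof.
move=> mM; have /andP[P1 P2] := iposn_ok pc mM.
rewrite /Rn /posT /iposT inordK; last by rewrite ltnS; apply: Pdom_le.
rewrite P2 andbT; move: P1; rewrite /Pdom; lia.
Qed.

Lemma q3 u : ~~ Rn u -> iposT (posT u) = u.
Proof.
move=> Ru; apply: val_inj; rewrite /iposT /posT /=.
have E := iposn_posn pc X0 (notR_Pdom Ru).
by rewrite E inordK ?ltn_ord.
Qed.

Lemma q4 u v : ~~ Rn u -> ~~ Rn v -> ee u v = (posT u == (posT v).+1) || (posT v == (posT u).+1).
Proof. move=> Ru Rv; rewrite /ee /rel_on srel_P //; exact: notR_Pdom. Qed.

Lemma ee_sym : symmetric ee.
Proof. move=> u v; exact: srel_sym. Qed.

Lemma ee_cut : cutP ord0 Rn ee.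
Proof.
move=> u v Ru Rv; rewrite /ee /rel_on srel_R //.
rewrite /srelc; case/boolP: (maxn u v \in branch_starts c) => vb /=;
  move: Ru Rv; rewrite /Rn => Ru Rv H; apply: val_inj => /=; lia.
Qed.

Lemma ee_R u v : Rn u -> ee u v = srelc c u v.
Proof. by move=> Ru; rewrite /ee /rel_on srel_R. Qed.

Lemma ee_walks k u v : ~~ Rn u -> ~~ Rn v -> walks (eP Rn ee) k u v = pw (X + Y) k (posT u) (posT v).
Proof. exact: (walksP_pw q1 q2 q3 q4). Qed.

Lemma ee_sum k : \sum_(u | ~~ Rn u) walks (eP Rn ee) k u u = \sum_(m < (X + Y).+1) pw (X + Y) k m m.
Proof.
rewrite (eq_bigr (fun u => pw (X + Y) k (posT u) (posT u))); last by move=> u Ru; rewrite ee_walks.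
exact: (sum_notR q1 q2 q3 (fun x => pw (X + Y) k x x)).
Qed.

Lemma ee_r n : walks (eP Rn ee) n ord0 ord0 = pw (X + Y) n Y Y.
Proof. by rewrite ee_walks. Qed.

End Concrete.

Arguments ee : clear implicits.
Arguments Rn : clear implicits.

Lemma main c A B : c != [::] -> all (fun x => 0 < x) c -> 0 < A -> A + 2 <= B ->
  walk_prec (starlike_rel (c ++ [:: A; B])) (starlike_rel (c ++ [:: A.+1; B.-1])).
Proof.
move=> c0 pc A0 AB.
set N := sumn (c ++ [:: A; B]).
have HN1 : N = sumn c + A + B by rewrite /N sumn_cat /=; lia.
have HN2 : sumn (c ++ [:: A.+1; B.-1]) = N by rewrite /N !sumn_cat /=; lia.
have HN2' : N = sumn c + A.+1 + B.-1 by lia.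
have B0 : 0 < B.-1 by lia.
have Bp : 0 < B by lia.
have E1 k : closed_walks (starlike_rel (c ++ [:: A; B])) k = closed_walks (ee c N A B) k.
  by apply: eq_closed.
have E2 k : closed_walks (starlike_rel (c ++ [:: A.+1; B.-1])) k = closed_walks (ee c N A.+1 B.-1) k.
  rewrite (eq_closed (@starlike_relE (c ++ [:: A.+1; B.-1]))) /ee (cw_transport _ _ HN2) //.
have MM : A.+1 + B.-1 = A + B by lia.
have rR : ~~ Rn c N ord0 by rewrite /Rn.
have HR : forall u v, Rn c N u -> ee c N A B u v = ee c N A.+1 B.-1 u v.
  by move=> u v Ru; rewrite !ee_R.
have HW : forall n, walks (eP (Rn c N) (ee c N A B)) n ord0 ord0 <=
                    walks (eP (Rn c N) (ee c N A.+1 B.-1)) n ord0 ord0.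
  move=> n; rewrite (ee_r c0 pc A0 Bp HN1) (ee_r c0 pc (ltn0Sn A) B0 HN2') MM.
  rewrite (@pw_refl (A + B) n B B) ?leq_addl // (@pw_refl (A + B) n B.-1 B.-1); try lia.
  have -> : A + B - B = A by lia.
  have -> : A + B - B.-1 = A.+1 by lia.
  apply: pw_mono; lia.
have HP : forall k, \sum_(u | ~~ Rn c N u) walks (eP (Rn c N) (ee c N A B)) k u u =
                    \sum_(u | ~~ Rn c N u) walks (eP (Rn c N) (ee c N A.+1 B.-1)) k u u.
  by move=> k; rewrite (ee_sum c0 pc A0 Bp HN1) (ee_sum c0 pc (ltn0Sn A) B0 HN2') MM.
have s1 := @ee_sym c N A B.
have s2 := @ee_sym c N A.+1 B.-1.
have k1 : cutP ord0 (Rn c N) (ee c N A B) by apply: ee_cut.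
have k2 : cutP ord0 (Rn c N) (ee c N A.+1 B.-1) by apply: ee_cut.
split.
  move=> k; rewrite E1 E2; exact: (cw_le rR s1 s2 k1 k2 HR HW HP).
exists (A + A + 2).+2; rewrite E1 E2.
have S0' := S0 c0 pc A0 Bp HN1.
have N1 : 1 < N.+1 by lia.
apply: (cw_lt rR s1 s2 k1 k2 HR HW HP (w0 := inord 1)).
- by rewrite /Rn inordK //= S0'.
- rewrite /ee /rel_on inordK // /srel /star_adj_ord /=.
  by case: (1 \in _).
- rewrite (ee_r c0 pc A0 Bp HN1) (ee_r c0 pc (ltn0Sn A) B0 HN2') MM.
  rewrite (@pw_refl (A + B) _ B B) ?leq_addl // (@pw_refl (A + B) _ B.-1 B.-1); try lia.
  have -> : A + B - B = A by lia.
  have -> : A + B - B.-1 = A.+1 by lia.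
  apply: pw_strict; lia.
Qed.

Theorem proposition1 (a : seq nat) :
  3 <= size a ->
  all (fun x => 1 <= x) a ->
  sorted leq a ->
  nth 0 a (size a).-2 + 2 <= nth 0 a (size a).-1 ->
  walk_prec (starlike_rel a)
    (starlike_rel (take (size a).-2 a ++
                   [:: (nth 0 a (size a).-2).+1; (nth 0 a (size a).-1).-1])).
Proof.
move=> sa pa _ AB.
set c := take (size a).-2 a.
set A := nth 0 a (size a).-2.
set B := nth 0 a (size a).-1.
have Ha : a = c ++ [:: A; B].
  rewrite /c /A /B -{1}[a](cat_take_drop (size a).-2); congr (_ ++ _).
  rewrite (drop_nth 0); last by lia.
  rewrite (drop_nth 0); last by lia.
  rewrite drop_oversize; last by lia.
  by have -> : (size a).-2.+1 = (size a).-1 by lia.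
have c0 : c != [::].
  have sc : size c = (size a).-2 by rewrite /c size_takel //; lia.
  apply/negP => /eqP c0'; have := congr1 size c0'; rewrite sc /=; lia.
have pc : all (fun x => 0 < x) c.
  by apply/allP => x /mem_take xa; move/allP: pa => /(_ x xa).
have A0 : 0 < A.
  move/allP: pa => /(_ A); apply; rewrite /A mem_nth //. by move: sa; case: (size a) => [|[|n]].
have M := main c0 pc A0 AB.
by rewrite -Ha in M.
Qed.
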